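(* Let $n \geqslant 3$ and let $C_{n+1}$ be the cycle with vertex set $\{0,1,\ldots,n\}$ and edges $\{j,j+1\}$ for $0\leqslant j<n$ together with $\{n,0\}$. Then the word $012\ldots n$ does not occur as a subword (contiguous factor) of any uniform word whose alternating graph is $C_{n+1}$.
   Context: A word is uniform if each symbol occurring in it occurs the same number of times. A word $w$ is a subword of $v=v_0v_1\ldots v_N$ if $w=v_mv_{m+1}\ldots v_{m+k}$ for some $m,k$. Two distinct symbols $a,b$ alternate in a word $u$ if both occur in $u$ and, after erasing all other letters of $u$, one obtains a factor of $abab\ldots$ or of $baba\ldots$. The alternating graph of a word $u$ is the graph whose vertices are the symbols occurring in $u$, with an edge $(a,b)$ iff $a$ and $b$ alternate in $u$. *)

(* Defs.v *)
From mathcomp Require Import all_boot.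
Set Implicit Arguments. Unset Strict Implicit. Unset Printing Implicit Defensive.

Definition uniform (u : seq nat) : Prop :=
  forall a b, a \in u -> b \in u -> count_mem a u = count_mem b u.

Definition alt_word (a b : nat) (m : nat) : seq nat :=
  mkseq (fun i => if odd i then b else a) m.

Definition alternate (u : seq nat) (a b : nat) : Prop :=
  [/\ a != b, a \in u, b \in u &
     exists m, infix [seq x <- u | (x == a) || (x == b)] (alt_word a b m)
            \/ infix [seq x <- u | (x == a) || (x == b)] (alt_word b a m)].

Definition cycle_edge (n a b : nat) : bool :=
  [&& a <= n, b <= n &
    [|| b == a.+1, a == b.+1, (a == 0) && (b == n) | (a == n) && (b == 0)]].

Definition altgraph_is_cycle (u : seq nat) (n : nat) : Prop :=
  (forall x, x \in u <-> x <= n) /\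
  (forall a b, alternate u a b <-> cycle_edge n a b).

(* Main.v *)
Require Import Defs.
From mathcomp Require Import all_boot.
From mathcomp Require Import zify.
Set Implicit Arguments. Unset Strict Implicit. Unset Printing Implicit Defensive.
Definition nq : rel nat := fun x y => x != y.
Definition P2 (a b : nat) : pred nat := fun x => (x == a) || (x == b).
Lemma P2C a b : P2 b a =1 P2 a b.
Proof. by move=> z; rewrite /P2 orbC. Qed.
Lemma cnt_last x y t : x != y -> all (P2 x y) t -> path nq x t ->
  count_mem x (x :: t) = count_mem y (x :: t) + ~~ odd (size t) /\
  last x t = if odd (size t) then y else x.
Proof.
elim: t x y => [|z t IH] x y xy /=.
- by move=> _ _; rewrite eqxx (negbTE xy).
- case/andP => /orP [/eqP ->|/eqP ->] Hall /andP [Hz Hp].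
  + by rewrite /nq eqxx in Hz.
  + have Hall' : all (P2 y x) t by rewrite (eq_all (P2C x y)).
    have yx : y != x by rewrite eq_sym.
    have [H1 H2] := IH y x yx Hall' Hp.
    move: H1; rewrite /= eqxx (negbTE xy) (negbTE yx) H2.
    case: (odd (size t)) => /=; split => //; lia.
Qed.

Lemma alt_wordS x y m : alt_word x y m.+1 = x :: alt_word y x m.
Proof.
rewrite /alt_word /mkseq /= -[1]/(1 + 0) iotaDl -map_comp.
congr (_ :: _); apply: eq_map => i /=. by case: (odd i).
Qed.

Lemma alt_path x y m : x != y -> path nq y (alt_word x y m).
Proof.
elim: m x y => [|m IH] x y xy //. rewrite alt_wordS /= IH ?andbT //; by rewrite /nq eq_sym.
Qed.

Lemma alt_sorted x y m : x != y -> sorted nq (alt_word x y m).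
Proof. case: m => [|m] xy //. rewrite alt_wordS /=. apply: alt_path. by rewrite eq_sym. Qed.

Lemma cyc a b x t : a != b -> P2 a b x -> all (P2 a b) t -> path nq x t ->
  count_mem a (x :: t) = count_mem b (x :: t) -> cycle nq (x :: t).
Proof.
move=> ab /orP [/eqP ->|/eqP ->] Hall Hp Hc; rewrite /= rcons_path Hp /=.
- have [H1 H2] := cnt_last ab Hall Hp.
  rewrite H2; move: Hc; rewrite H1; case: (odd (size t)) => /= Hc.
  + by rewrite /nq eq_sym.
  + lia.
- have ba : b != a by rewrite eq_sym.
  have Hall' : all (P2 b a) t by rewrite (eq_all (P2C a b)).
  have [H1 H2] := cnt_last ba Hall' Hp.
  rewrite H2; move: Hc; rewrite H1; case: (odd (size t)) => /= Hc.
  + by rewrite /nq eq_sym.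
  + lia.
Qed.

Lemma cnt_filt a b u z : P2 a b z ->
  count_mem z [seq x <- u | (x == a) || (x == b)] = count_mem z u.
Proof.
move=> Pz; rewrite count_filter; apply: eq_count => y /=.
by case: (eqVneq y z) => [->|] //=; rewrite Pz.
Qed.

Lemma alt_cycle u a b : uniform u -> alternate u a b ->
  cycle nq [seq x <- u | (x == a) || (x == b)].
Proof.
move=> Hu [ab au bu [m Hm]].
have Hs : sorted nq [seq x <- u | (x == a) || (x == b)].
  case: Hm => Hm; apply: (infix_sorted Hm); apply: alt_sorted => //.
  by rewrite eq_sym.
have Hall := filter_all (P2 a b) u.
move: Hs Hall (@cnt_filt a b u a) (@cnt_filt a b u b).
rewrite /P2; case: [seq x <- u | (x == a) || (x == b)] => [|x t] //= Hp /andP [Px Ht] Ca Cb.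
apply: (cyc ab) => //.
rewrite /= Ca ?Cb ?(Hu a b) // ?eqxx ?orbT //.
Qed.

Lemma AW x y t : x != y -> all (P2 x y) t -> path nq x t ->
  x :: t = alt_word x y (size t).+1.
Proof.
elim: t x y => [|z t IH] x y xy /=.
- by move=> _ _; rewrite /alt_word.
- case/andP => /orP [/eqP ->|/eqP ->] Hall /andP [Hz Hp].
  + by rewrite /nq eqxx in Hz.
  + have Hall' : all (P2 y x) t by rewrite (eq_all (P2C x y)).
    have yx : y != x by rewrite eq_sym.
    by rewrite alt_wordS -(IH y x yx Hall' Hp).
Qed.

Lemma alt_of_cycle u a b : a != b -> a \in u -> b \in u ->
  cycle nq [seq x <- u | (x == a) || (x == b)] -> alternate u a b.
Proof.
move=> ab au bu Hc; split => //.
have Hall := filter_all (P2 a b) u.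
have ain : a \in [seq x <- u | (x == a) || (x == b)] by rewrite mem_filter eqxx au.
move: Hc Hall ain; rewrite /P2.
case: [seq x <- u | (x == a) || (x == b)] => [|x t] //= Hc /andP [/orP [/eqP Ex|/eqP Ex] Ht] _;
  subst x; move: Hc; rewrite rcons_path => /andP [Hp _]; exists (size t).+1.
- by left; rewrite -AW ?infix_refl.
- right; rewrite -AW ?infix_refl //; first by rewrite eq_sym.
  by rewrite (eq_all (P2C a b)).
Qed.

Definition lead (w : seq nat) a b := forall j,
  count_mem b (take j w) <= count_mem a (take j w) <= (count_mem b (take j w)).+1.

Lemma lead_path w a b : a != b ->
  path nq b [seq x <- w | (x == a) || (x == b)] -> lead w a b.
Proof.
elim: w a b => [|x w IH] a b ab Hp j; first by rewrite /=.
case: j => [|j] //=.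
move: Hp => /=.
case: (eqVneq x a) => [->|xa] /=.
- move=> /andP [_ Hp].
  have ba : b != a by rewrite eq_sym.
  have := IH b a ba; rewrite (eq_filter (P2C a b)) => /(_ Hp j).
  rewrite (negbTE ab) /= !add0n add1n ltnS => /andP [h1 h2]; by rewrite h1 h2.
- case: (eqVneq x b) => [Ex|xb] /=.
  + by subst x; rewrite /nq eqxx.
  + move=> Hp; have := IH a b ab Hp j. by rewrite !add0n.
Qed.

Lemma path_lead w a b : a != b -> lead w a b ->
  path nq b [seq x <- w | (x == a) || (x == b)].
Proof.
elim: w a b => [|x w IH] a b ab L //=.
case: (eqVneq x a) => [Ex|xa] /=.
- subst x. have ba : b != a by rewrite eq_sym.
  rewrite /= {1}/nq ba /=.
  have L' : lead w b a.
    move=> j; have := L j.+1; rewrite /= eqxx (negbTE ab) add0n add1n ltnS => /andP [h1 h2]; by rewrite h1 h2.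
  by have := IH b a ba L'; rewrite (eq_filter (P2C a b)).
- case: (eqVneq x b) => [Ex|xb] /=.
  + subst x. have := L 1; rewrite /= eqxx (negbTE xa) /= take0 /=. by [].
  + apply: (IH a b ab) => j; have := L j.+1.
    by rewrite /= (negbTE xa) (negbTE xb) !add0n.
Qed.

Lemma filt_head a b n : a < b -> b <= n ->
  exists t, [seq x <- iota 0 n.+1 | (x == a) || (x == b)] = a :: t.
Proof.
move=> ab bn.
have -> : n.+1 = a + (n.+1 - a) by lia.
rewrite iotaD filter_cat.
have -> : [seq x <- iota 0 a | (x == a) || (x == b)] = [::].
  rewrite (@eq_in_filter _ _ pred0); first by rewrite filter_pred0.
  move=> z; rewrite mem_iota => /andP [_ za] /=.
  apply/negbTE; apply/negP => /orP [] /eqP; lia.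
have -> : n.+1 - a = (n - a).+1 by lia.
by rewrite /= eqxx /=; eexists.
Qed.

Lemma cyc_path_head x t : cycle nq (x :: t) -> path nq x t.
Proof. by rewrite /= rcons_path => /andP []. Qed.

Theorem lemma1 (n : nat) (u : seq nat) :
  3 <= n -> uniform u -> altgraph_is_cycle u n ->
  ~~ infix (iota 0 n.+1) u.
Proof.
move=> n3 Hu [Hmem Hedge]. apply/negP => /infixP [p [q Eu]].
set F := iota 0 n.+1 in Eu.
set w := F ++ q ++ p.
have Hfw : forall a b, [seq x <- w | (x == a) || (x == b)] =
   rot (size [seq x <- p | (x == a) || (x == b)]) [seq x <- u | (x == a) || (x == b)].
  move=> a b; rewrite Eu filter_cat rot_size_cat /w !filter_cat catA //.
have Hcw : forall z, count_mem z w = count_mem z u.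
  move=> z; rewrite Eu /w !count_cat; lia.
have Hlead : forall a b, a < b -> b <= n -> cycle_edge n a b -> lead w a b.
  move=> a b ab bn Hab.
  have Hc := alt_cycle Hu ((Hedge a b).2 Hab).
  rewrite -(rot_cycle (size [seq x <- p | (x == a) || (x == b)])) -Hfw in Hc.
  have [t Ht] := filt_head ab bn.
  move: Hc; rewrite /w filter_cat -/F Ht cat_cons => /cyc_path_head Hp.
  apply: lead_path; first by rewrite neq_ltn ab.
  rewrite /w filter_cat -/F Ht cat_cons /= Hp andbT /nq.
  by rewrite neq_ltn ab orbT.
have Hl1 : forall i, i < n -> lead w i i.+1.
  move=> i iu; apply: Hlead => //; rewrite /cycle_edge; apply/and3P; split => //; first lia.
  by rewrite eqxx.
have Hl0 : lead w 0 n.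
  apply: Hlead => //; first lia.
  by rewrite /cycle_edge leqnn /= eqxx !orbT.
have L02 : lead w 0 2.
  move=> j.
  have mono : forall k i, i + k <= n ->
      count_mem (i + k) (take j w) <= count_mem i (take j w).
    elim=> [|k IH] i ik; first by rewrite addn0.
    apply: leq_trans (IH i _); last lia.
    rewrite addnS; by case/andP: (Hl1 (i + k) ltac:(lia) j).
  have h1 := mono 2 0 ltac:(lia).
  have h2 := mono (n - 2) 2 ltac:(lia).
  case/andP: (Hl0 j) => _ h3.
  rewrite add0n in h1. have e : 2 + (n - 2) = n by lia.
  rewrite e in h2.
  apply/andP; split => //. exact: leq_trans h3 _.
have Hp := path_lead (isT : 0 != 2) L02.
have Hc : cycle nq [seq x <- w | (x == 0) || (x == 2)].
  have [t Ht] := @filt_head 0 2 n isT ltac:(lia).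
  have Es : [seq x <- w | (x == 0) || (x == 2)] =
      0 :: (t ++ [seq x <- q ++ p | (x == 0) || (x == 2)]).
    by rewrite /w /F !filter_cat Ht.
  rewrite Es /= in Hp.
  have Hall : all (P2 0 2) (t ++ [seq x <- q ++ p | (x == 0) || (x == 2)]).
    by have := filter_all (P2 0 2) w; rewrite /P2 Es => /andP [].
  rewrite Es; apply: (cyc (a:=0) (b:=2)) => //.
  rewrite -Es.
  rewrite (@cnt_filt 0 2 w 0) // (@cnt_filt 0 2 w 2) // !Hcw.
  by apply: Hu; apply/Hmem; lia.
rewrite Hfw rot_cycle in Hc.
have := (Hedge 0 2).1 (alt_of_cycle (isT : 0 != 2) ((Hmem 0).2 (leq0n n)) ((Hmem 2).2 ltac:(lia)) Hc).
rewrite /cycle_edge /=. 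
case: n n3 {Hmem Hedge Hfw Hcw Hlead Hl1 Hl0 L02 Hp Hc F w Eu} => [|[|[|[|n]]]] //.
Qed.
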